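(* Let $G$ be any graph on $n$ vertices. For each edge $e\in E(G)$ let $c(e)$ denote the largest $r$ such that $e$ is an edge of a subgraph of $G$ isomorphic to $K_r$ (so $c(e)\ge 2$). Then \[ \sum_{e\in E(G)} \frac{c(e)}{c(e)-1} \le \frac{n^2}{2}, \] and equality holds if and only if $G$ is a complete multipartite graph with at least two parts, all parts having the same size.
   Context: $K_r$ denotes the complete graph on $r$ vertices. Graphs are finite and simple. *)

(* Defs.v *)
From HB Require Import structures.
From mathcomp Require Import all_boot all_order all_algebra.
Set Implicit Arguments. Unset Strict Implicit. Unset Printing Implicit Defensive.
Import Order.TTheory GRing.Theory Num.Theory.

Definition simple_graph (V : finType) (e : rel V) : Prop :=
  symmetric e /\ irreflexive e.

Definition edges (V : finType) (e : rel V) : {set {set V}} :=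
  [set E : {set V} | [exists x : V, exists y : V, e x y && (E == [set x; y])]].

Definition clique (V : finType) (e : rel V) (S : {set V}) : bool :=
  [forall x in S, forall y in S, (x != y) ==> e x y].

Definition cnum (V : finType) (e : rel V) (A : {set V}) : nat :=
  \max_(S : {set V} | clique e S && (A \subset S)) #|S|.

Definition balanced_complete_multipartite (V : finType) (e : rel V) : Prop :=
  exists (k : nat) (f : V -> 'I_k),
    [/\ 2 <= k,
        (forall x y, e x y = (f x != f y)) &
        (forall i j : 'I_k, #|f @^-1: [set i]| = #|f @^-1: [set j]|)].

(* Main.v *)
Require Import Defs.
From HB Require Import structures.
From mathcomp Require Import all_boot all_order all_algebra.
Import Order.TTheory GRing.Theory Num.Theory.
Local Open Scope ring_scope.
From mathcomp Require Import ring lra zify.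
Set Implicit Arguments. Unset Strict Implicit.

Definition wt (c : nat) : rat := c%:R / (c%:R - 1).

Lemma wt_ge0 c : 0 <= wt c.
Proof.
rewrite /wt; case: c => [|[|c]]; first by rewrite mul0r.
  by rewrite subrr invr0 mulr0.
apply: divr_ge0; first exact: ler0n.
by rewrite subr_ge0 ler1n.
Qed.

Lemma wt_anti (a b : nat) : (2 <= a)%N -> (a <= b)%N -> wt b <= wt a.
Proof.
move=> ha hab; rewrite /wt.
have ha' : 1 < (a%:R : rat) by rewrite ltr1n.
have hb' : (a%:R : rat) <= b%:R by rewrite ler_nat.
have pa : 0 < (a%:R : rat) - 1 by rewrite subr_gt0.
have pb : 0 < (b%:R : rat) - 1 by rewrite subr_gt0; lra.
rewrite ler_pdivrMr // mulrAC ler_pdivlMr //.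
nra.
Qed.

Lemma wt_mul (a : nat) : (0 < a)%N -> a%:R * wt a.+1 = a.+1%:R.
Proof.
move=> ha; rewrite /wt -addn1 natrD addrK mulrC -mulrA mulVf ?mulr1 //.
by rewrite pnatr_eq0 -lt0n.
Qed.

Lemma wt_sq (t : nat) : (t * (t - 1))%:R * wt t <= (t ^ 2)%:R.
Proof.
case: t => [|[|t]]; first by rewrite mul0n mul0r.
  by rewrite subnn muln0 mul0r.
rewrite /wt subn1 /=.
have h : (t.+2%:R : rat) - 1 = t.+1%:R by rewrite -[t.+2]addn1 natrD addrK.
rewrite h natrM natrX le_eqVlt; apply/orP; left; apply/eqP.

have h1 : (t.+1%:R : rat) != 0 by rewrite pnatr_eq0.
by rewrite -mulrA [t.+1%:R * _]mulrC -mulrA mulVf // mulr1 expr2.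
Qed.

Lemma cliqueP {V : finType} (e : rel V) (S : {set V}) x y :
  clique e S -> x \in S -> y \in S -> x != y -> e x y.
Proof. by move=> /forallP /(_ x) /implyP H xS yS; move: (H xS) => /forallP /(_ y) /implyP /(_ yS) /implyP; apply. Qed.

Lemma cliqueI {V : finType} (e : rel V) (S : {set V}) :
  (forall x y, x \in S -> y \in S -> x != y -> e x y) -> clique e S.
Proof. move=> H; apply/forallP=> x; apply/implyP=> xS; apply/forallP=> y; apply/implyP=> yS; apply/implyP; exact: H. Qed.

Lemma clique_sub {V : finType} (e : rel V) (S T : {set V}) : clique e S -> T \subset S -> clique e T.
Proof. move=> cS /subsetP TS; apply: cliqueI => x y xT yT; apply: cliqueP cS _ _; exact: TS. Qed.

Lemma clique2 {V : finType} (e : rel V) x y : symmetric e -> e x y -> clique e [set x; y].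
Proof.
move=> sy exy; apply: cliqueI => a b; rewrite !inE => /orP[]/eqP-> /orP[]/eqP->; rewrite ?eqxx //.
by rewrite sy.
Qed.

Definition cW {V : finType} (e : rel V) (W : {set V}) (x y : V) : nat :=
  \max_(S : {set V} | [&& clique e S, [set x; y] \subset S & S \subset W]) #|S|.

Lemma cW_ge {V : finType} (e : rel V) (W : {set V}) (S : {set V}) x y :
  clique e S -> x \in S -> y \in S -> S \subset W -> (#|S| <= cW e W x y)%N.
Proof.
move=> cS xS yS SW; apply: leq_bigmax_cond; rewrite cS SW andbT /=.
by apply/subsetP=> z; rewrite !inE => /orP[]/eqP->.
Qed.

Lemma cW_le {V : finType} (e : rel V) (W : {set V}) x y t :
  (forall S : {set V}, clique e S -> S \subset W -> (#|S| <= t)%N) -> (cW e W x y <= t)%N.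
Proof.
move=> H; apply/bigmax_leqP => S /and3P[cS _ SW]; exact: H.
Qed.

Lemma cW_sym {V : finType} (e : rel V) (W : {set V}) x y : cW e W x y = cW e W y x.
Proof. by rewrite /cW setUC. Qed.

Lemma cW_mono {V : finType} (e : rel V) (W1 W2 : {set V}) x y :
  W1 \subset W2 -> (cW e W1 x y <= cW e W2 x y)%N.
Proof.
move=> W12; apply/bigmax_leqP => S /and3P[cS xyS SW]; apply: leq_bigmax_cond.
by rewrite cS xyS (subset_trans SW W12).
Qed.

Lemma cW_ge2 {V : finType} (e : rel V) (W : {set V}) x y :
  symmetric e -> irreflexive e -> e x y -> x \in W -> y \in W -> (2 <= cW e W x y)%N.
Proof.
move=> sy ir exy xW yW.
have xy : x != y by apply/eqP=> E; move: exy; rewrite E ir.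
have := cW_ge (clique2 sy exy) (setU11 x [set y]) (setU1r x (set11 y)) _.
rewrite cards2 xy; apply.
by apply/subsetP=> z; rewrite !inE => /orP[]/eqP->.
Qed.

Definition maxcl {V : finType} (e : rel V) (W K : {set V}) : Prop :=
  [/\ clique e K, K \subset W &
      forall S : {set V}, clique e S -> S \subset W -> (#|S| <= #|K|)%N].

Lemma maxcl_ex {V : finType} (e : rel V) (W : {set V}) : exists K, maxcl e W K.
Proof.
have P0 : clique e set0 && (set0 \subset W).
  by rewrite sub0set andbT; apply: cliqueI => x y; rewrite inE.
case: (@arg_maxnP _ set0 (fun S : {set V} => clique e S && (S \subset W)) (fun S : {set V} => #|S|) P0) => K /andP[cK KW] H.
exists K; split=> // S cS SW; apply: H; by rewrite cS SW.
Qed.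

Definition gW {V : finType} (e : rel V) (W : {set V}) x y : rat :=
  if e x y then wt (cW e W x y) else 0.
Definition TW {V : finType} (e : rel V) (W : {set V}) : rat :=
  \sum_(x in W) \sum_(y in W) gW e W x y.
Definition PW {V : finType} (e : rel V) (W K : {set V}) v : rat :=
  \sum_(u in K) gW e W v u.

Lemma gW_ge0 {V : finType} (e : rel V) W x y : 0 <= gW e W x y.
Proof. rewrite /gW; case: ifP => _ //; exact: wt_ge0. Qed.

Lemma gW_sym {V : finType} (e : rel V) W x y : symmetric e -> gW e W x y = gW e W y x.
Proof. by move=> sy; rewrite /gW sy cW_sym. Qed.

Lemma TW_decomp {V : finType} (e : rel V) (W K : {set V}) :
  K \subset W -> symmetric e ->
  TW e W = \sum_(x in K) \sum_(y in K) gW e W x y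
         + 2%:R * \sum_(v in W :\: K) PW e W K v
         + \sum_(x in W :\: K) \sum_(y in W :\: K) gW e W x y.
Proof.
move=> KW sy.
have WK : W :&: K = K by apply/setIidPr.
rewrite /TW (big_setID K) WK /=.
rewrite (eq_bigr (fun x => \sum_(y in K) gW e W x y + \sum_(y in W :\: K) gW e W x y)); last first.
  by move=> x _; rewrite (big_setID K) WK.
rewrite [X in _ + X](eq_bigr (fun x => \sum_(y in K) gW e W x y + \sum_(y in W :\: K) gW e W x y)); last first.
  by move=> x _; rewrite (big_setID K) WK.
rewrite !big_split /=.
have E : \sum_(i in K) \sum_(y in W :\: K) gW e W i y = \sum_(v in W :\: K) PW e W K v.
  rewrite exchange_big; apply: eq_bigr => v _; apply: eq_bigr => u _; exact: gW_sym.
rewrite E /PW; ring.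
Qed.

Lemma KK_bound {V : finType} (e : rel V) (W K : {set V}) :
  clique e K -> K \subset W -> irreflexive e ->
  \sum_(x in K) \sum_(y in K) gW e W x y <= (#|K| ^ 2)%:R.
Proof.
move=> cK KW ir.
have H : forall x, x \in K -> \sum_(y in K) gW e W x y <= wt #|K| *+ (#|K| - 1).
  move=> x xK; rewrite (big_setD1 x xK) /= {1}/gW ir add0r.
  have c : #|K :\ x| = (#|K| - 1)%N by rewrite [#|K|](cardsD1 x K) xK addKn.
  rewrite -c -sumr_const; apply: ler_sum => y; rewrite !inE => /andP[yx yK].
  rewrite /gW; case: ifP => exy; last exact: wt_ge0.
  apply: wt_anti.
    have <- : #|[set x; y]| = 2%N by rewrite cards2 eq_sym yx.
    apply: subset_leq_card; apply/subsetP=> z; rewrite !inE => /orP[]/eqP->//.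
  by apply: cW_ge.
apply: le_trans (wt_sq #|K|).
apply: le_trans (ler_sum _ H) _.
by rewrite sumr_const -mulrnA mulr_natl mulnC.
Qed.

Lemma WW_bound {V : finType} (e : rel V) (W W' : {set V}) :
  W' \subset W -> symmetric e -> irreflexive e ->
  \sum_(x in W') \sum_(y in W') gW e W x y <= TW e W'.
Proof.
move=> W'W sy ir; apply: ler_sum => x xW; apply: ler_sum => y yW.
rewrite /gW; case: ifP => // exy.
apply: wt_anti; first exact: cW_ge2.
exact: cW_mono.
Qed.

Lemma PW_bound {V : finType} (e : rel V) (W K : {set V}) v :
  maxcl e W K -> symmetric e -> irreflexive e -> v \in W -> v \notin K ->
  (#|[set u in K | e v u]| < #|K|)%N /\
  PW e W K v <= #|[set u in K | e v u]|%:R * wt #|[set u in K | e v u]|.+1.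
Proof.
move=> [cK KW mK] sy ir vW vK.
set N := [set u in K | e v u].
have NK : N \subset K by apply/subsetP=> u; rewrite inE => /andP[].
have cN : clique e (v |: N).
  apply: cliqueI => x y; rewrite !inE => /orP[/eqP->|/andP[xK exv]] /orP[/eqP->|/andP[yK eyv]] xy.
  - by rewrite eqxx in xy.
  - exact: eyv.
  - by rewrite sy.
  - exact: (cliqueP cK).
have NW : v |: N \subset W.
  apply/subsetP=> z; rewrite !inE => /orP[/eqP->//|/andP[zK _]]; exact: (subsetP KW).
have cardN : #|v |: N| = #|N|.+1.
  rewrite cardsU1; have -> : v \notin N by rewrite inE (negbTE vK).
  by [].
split; first by rewrite -ltnS -cardN ltnS; apply: mK.
rewrite /PW.
apply: le_trans (_ : \sum_(u in K) (if e v u then wt #|N|.+1 else 0) <= _).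
  apply: ler_sum => u uK; rewrite /gW; case: ifP => evu //.
  apply: wt_anti.
    by rewrite ltnS card_gt0; apply/set0Pn; exists u; rewrite inE uK evu.
  rewrite -cardN; apply: cW_ge => //; rewrite !inE ?eqxx ?uK ?evu ?orbT //.
rewrite -big_mkcondr /= (eq_bigl (fun u => u \in N)); last by move=> u; rewrite inE.
by rewrite sumr_const mulr_natl.
Qed.

Lemma PW_le {V : finType} (e : rel V) (W K : {set V}) v :
  maxcl e W K -> symmetric e -> irreflexive e -> v \in W -> v \notin K ->
  PW e W K v <= #|K|%:R /\
  (PW e W K v = #|K|%:R -> #|[set u in K | e v u]| = (#|K| - 1)%N).
Proof.
move=> mK sy ir vW vK; case: (PW_bound mK sy ir vW vK).
set a := #|[set u in K | e v u]| => hat P.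
case: a hat P => [|a] hat P.
  rewrite mul0r in P; split; first by apply: le_trans P _.
  by move=> E; move: P; rewrite E lern0 => /eqP E0; rewrite E0 in hat.
rewrite (@wt_mul a.+1 isT) in P; split; first by apply: le_trans P _; rewrite ler_nat.
move=> E; move: P; rewrite E ler_nat => h; apply/eqP; rewrite eqn_leq.
apply/andP; split; first by rewrite leq_subRL ?add1n //; apply: leq_ltn_trans hat.
by rewrite leq_subLR add1n.
Qed.

Lemma maxcl_gt0 {V : finType} (e : rel V) (W K : {set V}) x :
  maxcl e W K -> x \in W -> (0 < #|K|)%N.
Proof.
move=> [cK KW mK] xW; have := mK [set x]; rewrite cards1; apply.
  by apply: cliqueI => a b; rewrite !inE => /eqP-> /eqP->; rewrite eqxx.
by rewrite sub1set.
Qed.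

Lemma TW_le {V : finType} (e : rel V) (W : {set V}) :
  symmetric e -> irreflexive e -> TW e W <= (#|W| ^ 2)%:R.
Proof.
move=> sy ir; have [n] := ubnP #|W|; elim: n W => // n IH W Wn.
case: (set_0Vmem W) => [->|[x xW]].
  by rewrite /TW big_set0 cards0.
have [K mK] := maxcl_ex e W.
have t0 := maxcl_gt0 mK xW.
case: (mK) => cK KW mK'.
have cW' : (#|K| + #|W :\: K| = #|W|)%N.
  by rewrite -(cardsID K W) (setIidPr KW).
have lt : (#|W :\: K| < n)%N.
  rewrite -ltnS; apply: leq_trans Wn; rewrite ltnS -cW' -{1}(add0n #|W :\: K|) ltn_add2r //.
have IH' := IH _ lt.
rewrite (TW_decomp KW sy).
have hK := KK_bound cK KW ir.
have hW := WW_bound (subsetDl W K) sy ir.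
have hP : \sum_(v in W :\: K) PW e W K v <= #|K|%:R *+ #|W :\: K|.
  rewrite -sumr_const; apply: ler_sum => v; rewrite inE => /andP[vK vW].
  by case: (PW_le mK sy ir vW vK).
rewrite -cW' natrX natrD.
move: hK hW hP IH'; rewrite !natrX -mulr_natr.
move: (TW e (W :\: K)) => T1; set A := \sum_(x in K) _; set B := \sum_(x in _) _; set C := \sum_(x in _) _.
move=> *; nra.
Qed.

Lemma tight {V : finType} (e : rel V) (W K : {set V}) v :
  symmetric e -> irreflexive e -> TW e W = (#|W| ^ 2)%:R ->
  maxcl e W K -> v \in W -> v \notin K ->
  #|[set u in K | e v u]| = (#|K| - 1)%N.
Proof.
move=> sy ir Eq mK vW vK.
case: (mK) => cK KW mK'.
have cW' : (#|K| + #|W :\: K| = #|W|)%N.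
  by rewrite -(cardsID K W) (setIidPr KW).
have IH' := TW_le (W :\: K) sy ir.
have hK := KK_bound cK KW ir.
have hW := WW_bound (subsetDl W K) sy ir.
have hP : forall v, v \in W :\: K -> PW e W K v <= #|K|%:R.
  move=> u; rewrite inE => /andP[uK uW].
  by case: (PW_le mK sy ir uW uK).
have hS : \sum_(v in W :\: K) (#|K|%:R - PW e W K v) <= 0.
  move: Eq; rewrite (TW_decomp KW sy) sumrB sumr_const -cW' natrX natrD.
  move: hK hW IH'; rewrite !natrX -mulr_natr.
  move: (TW e (W :\: K)) => T1; set A := \sum_(x in K) _; set B := \sum_(x in _) _; set C := \sum_(x in _) _.
  move=> *; nra.
have v' : v \in W :\: K by rewrite inE vK vW.
have H0 : forall u, u \in W :\: K -> 0 <= #|K|%:R - PW e W K u.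
  by move=> u uW; rewrite subr_ge0; apply: hP.
have := @psumr_eq0P _ _ (fun v => v \in W :\: K) (fun v => #|K|%:R - PW e W K v) H0.
have hz : \sum_(v in W :\: K) (#|K|%:R - PW e W K v) = 0.
  by apply/eqP; rewrite eq_le hS sumr_ge0.
move=> /(_ hz v v').
move/eqP; rewrite subr_eq0 => /eqP E.
by case: (PW_le mK sy ir vW vK) => _; apply; rewrite E.
Qed.

Lemma cmp_c {V X : finType} (e : rel V) (W : {set V}) (f : V -> X) (D : {set X}) (r : X -> V) :
  (forall x y, x \in W -> y \in W -> e x y = (f x != f y)) ->
  (forall x, x \in W -> f x \in D) ->
  (forall u, u \in D -> r u \in W /\ f (r u) = u) ->
  forall x y, x \in W -> y \in W -> e x y -> cW e W x y = #|D|.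
Proof.
move=> He Hf Hr x y xW yW exy.
apply/eqP; rewrite eqn_leq; apply/andP; split.
  apply: cW_le => S cS SW.
  have inj : {in S &, injective f}.
    move=> a b aS bS fab; apply/eqP; apply: contraT => ab.
    have := cliqueP cS aS bS ab.
    by rewrite He ?(subsetP SW) // fab eqxx.
  rewrite -(card_in_imset inj); apply: subset_leq_card.
  apply/subsetP=> z /imsetP[a aS ->]; apply: Hf; exact: (subsetP SW).
have fxy : f x != f y by rewrite -He.
pose r' u := if u == f x then x else if u == f y then y else r u.
have Hr' : forall u, u \in D -> r' u \in W /\ f (r' u) = u.
  move=> u uD; rewrite /r'; case: eqP => [->|_]; first by [].
  case: eqP => [->|_]; first by []. exact: Hr.
have inj : {in D &, injective r'}.
  move=> a b aD bD E; case: (Hr' a aD) => _ <-; case: (Hr' b bD) => _ <-; by rewrite E.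
rewrite -(card_in_imset inj); apply: cW_ge.
- apply: cliqueI => a b /imsetP[u uD ->] /imsetP[u' u'D ->] neq.
  case: (Hr' u uD) => uW fu; case: (Hr' u' u'D) => u'W fu'.
  rewrite He // fu fu'; apply: contraNneq neq => ->; by [].
- apply/imsetP; exists (f x); first exact: Hf.
  by rewrite /r' eqxx.
- apply/imsetP; exists (f y); first exact: Hf.
  by rewrite /r' eq_sym (negbTE fxy) eqxx.
- apply/subsetP=> z /imsetP[u uD ->]; by case: (Hr' u uD).
Qed.

Lemma part_sum {V X : finType} (W : {set V}) (f : V -> X) (D : {set X}) (F : X -> rat) :
  (forall x, x \in W -> f x \in D) ->
  \sum_(x in W) F (f x) = \sum_(u in D) F u *+ #|[set y in W | f y == u]|.
Proof.
move=> Hf; rewrite (partition_big f (fun u => u \in D)) //=.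
apply: eq_bigr => u _; rewrite -sumr_const; apply: eq_big => y; first by rewrite inE.
by move=> /andP[_ /eqP->].
Qed.

Lemma card_neq {V X : finType} (W : {set V}) (f : V -> X) u :
  #|[set y in W | f y != u]| = (#|W| - #|[set y in W | f y == u]|)%N.
Proof.
have E1 : [set y in W | f y == u] = W :&: [set y | f y == u].
  by apply/setP=> y; rewrite !inE.
have E2 : [set y in W | f y != u] = W :\: [set y | f y == u].
  by apply/setP=> y; rewrite !inE andbC.
by rewrite E1 E2 -[in #|W|](cardsID [set y | f y == u] W) addKn.
Qed.

Lemma cmp_T {V X : finType} (e : rel V) (W : {set V}) (f : V -> X) (D : {set X}) (r : X -> V) :
  (forall x y, x \in W -> y \in W -> e x y = (f x != f y)) ->
  (forall x, x \in W -> f x \in D) ->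
  (forall u, u \in D -> r u \in W /\ f (r u) = u) ->
  TW e W = wt #|D| * ((#|W| * #|W|)%:R
                      - \sum_(u in D) (#|[set y in W | f y == u]| * #|[set y in W | f y == u]|)%:R).
Proof.
move=> He Hf Hr.
have S1 : forall x, x \in W -> \sum_(y in W) gW e W x y
            = wt #|D| * (#|W|%:R - #|[set y in W | f y == f x]|%:R).
  move=> x xW.
  rewrite (eq_bigr (fun y => if f y != f x then wt #|D| else 0)); last first.
    move=> y yW; rewrite /gW eq_sym -He //; case: ifP => exy //.
    by rewrite (cmp_c He Hf Hr xW yW exy).
  rewrite -big_mkcondr /= (eq_bigl (fun y => y \in [set y in W | f y != f x])); last first.
    by move=> y; rewrite inE.
  rewrite sumr_const card_neq.
  rewrite -[LHS]mulr_natr natrB //.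
  by apply: subset_leq_card; apply/subsetP=> y; rewrite inE => /andP[].
rewrite /TW (eq_bigr _ S1) -mulr_sumr sumrB sumr_const.
rewrite (part_sum (fun u => #|[set y in W | f y == u]|%:R) Hf).
by rewrite natrM mulr_natr; congr (_ * (_ - _)); apply: eq_bigr => u _; rewrite natrM mulr_natr.
Qed.

Lemma psum {V X : finType} (W : {set V}) (f : V -> X) (D : {set X}) :
  (forall x, x \in W -> f x \in D) ->
  \sum_(u in D) #|[set y in W | f y == u]|%:R = #|W|%:R :> rat.
Proof.
move=> Hf; have := part_sum (fun _ => 1 : rat) Hf; rewrite sumr_const => ->.
by apply: eq_bigr => u _; rewrite -mulr_natr mul1r.
Qed.

Lemma pair_eq {V : finType} (x y a b : V) :
  x != y -> [set x; y] = [set a; b] -> (x == a) && (y == b) || (x == b) && (y == a).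
Proof.
move=> xy E.
have xE : x \in [set a; b] by rewrite -E !inE eqxx.
have yE : y \in [set a; b] by rewrite -E !inE eqxx orbT.
have aE : a \in [set x; y] by rewrite E !inE eqxx.
move: xE yE aE; rewrite !inE => /orP[]/eqP xa /orP[]/eqP yb; subst => //=; rewrite ?eqxx ?andbT ?orbT //.
- by rewrite eqxx in xy.
- by rewrite eqxx in xy.
Qed.

Lemma edges_TW {V : finType} (e : rel V) :
  symmetric e -> irreflexive e ->
  \sum_(E in edges e) wt (cnum e E) = TW e setT / 2%:R.
Proof.
move=> sy ir.
have cn : forall x y, cnum e [set x; y] = cW e setT x y.
  by move=> x y; apply: eq_bigl => S; rewrite subsetT andbT.
rewrite /TW.
rewrite (eq_bigr (fun x => \sum_(y | e x y) wt (cnum e [set x; y]))); last first.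
  move=> x _; rewrite [RHS]big_mkcond /=; apply: eq_big => [y|y _]; first by rewrite inE.
  rewrite /gW cn.
  by case: (e x y).
rewrite pair_big_dep /= (eq_bigl (fun p : V * V => e p.1 p.2)); last by move=> p; rewrite inE.
rewrite (partition_big (fun p : V * V => [set p.1; p.2]) (fun E => E \in edges e)); last first.
  move=> [a b] /= eab; rewrite inE; apply/existsP; exists a; apply/existsP; exists b.
  by rewrite eab eqxx.
rewrite mulr_suml; apply: eq_bigr => E; rewrite inE => /existsP[a /existsP[b /andP[eab /eqP EE]]].
have ab : a != b by apply/eqP=> h; move: eab; rewrite h ir.
rewrite (eq_bigr (fun _ => wt (cnum e E))); last by move=> p /andP[_ /eqP->].
rewrite sumr_const.
have -> : #|[pred p : V * V | e p.1 p.2 && ([set p.1; p.2] == E)]| = 2%N.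
  have h2 : #|[set (a, b); (b, a)]| = 2%N.
    by rewrite cards2 xpair_eqE negb_and ab.
  rewrite -h2.
  apply: eq_card => [[x y]]; rewrite !inE /= EE !xpair_eqE.
  apply/idP/idP.
    move=> /andP[exy /eqP E']; have xy : x != y by apply/eqP=> h; move: exy; rewrite h ir.
    exact: pair_eq xy E'.
  move=> /orP[]/andP[/eqP-> /eqP->]; first by rewrite eab eqxx.
  by rewrite sy eab setUC eqxx.
by rewrite -[wt _ *+ 2]mulr_natr mulfK // pnatr_eq0.
Qed.

Lemma card_split {V : finType} (K : {set V}) (P : pred V) :
  (#|[set u in K | P u]| + #|[set u in K | ~~ P u]|)%N = #|K|.
Proof.
have E1 : [set u in K | P u] = K :&: [set u | P u] by apply/setP=> u; rewrite !inE.
have E2 : [set u in K | ~~ P u] = K :\: [set u | P u] by apply/setP=> u; rewrite !inE andbC.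
by rewrite E1 E2 cardsID.
Qed.

Lemma uniq_non {V : finType} (e : rel V) (W K : {set V}) v :
  symmetric e -> irreflexive e -> TW e W = (#|W| ^ 2)%:R ->
  maxcl e W K -> v \in W -> v \notin K ->
  exists m, [/\ m \in K, ~~ e v m & forall u, u \in K -> ~~ e v u -> u = m].
Proof.
move=> sy ir Eq mK vW vK.
have t0 := maxcl_gt0 mK vW.
have h := tight sy ir Eq mK vW vK.
have := card_split K (e v); rewrite h => h'.
have c1 : #|[set u in K | ~~ e v u]| == 1%N.
  apply/eqP; move: h' t0; set a := #|K|; set b := #|_|; move=> *; lia.
case/cards1P: c1 => m Em.
have mK' : m \in [set u in K | ~~ e v u] by rewrite Em set11.
move: mK'; rewrite inE => /andP[mK1 nm].
exists m; split=> // u uK nu.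
have : u \in [set u in K | ~~ e v u] by rewrite inE uK nu.
by rewrite Em inE => /eqP.
Qed.

Definition fK {V : finType} (e : rel V) (K : {set V}) (x : V) : V :=
  if x \in K then x else odflt x [pick u in K | ~~ e x u].

Lemma fK_out {V : finType} (e : rel V) (W K : {set V}) v :
  symmetric e -> irreflexive e -> TW e W = (#|W| ^ 2)%:R ->
  maxcl e W K -> v \in W -> v \notin K ->
  [/\ fK e K v \in K, ~~ e v (fK e K v) & forall u, u \in K -> ~~ e v u -> u = fK e K v].
Proof.
move=> sy ir Eq mK vW vK.
have [m [mK1 nm um]] := uniq_non sy ir Eq mK vW vK.
rewrite /fK (negbTE vK); case: pickP => [u /andP[uK nu] | H] /=.
  by have := um u uK nu => ->.
by move: (H m); rewrite mK1 nm.
Qed.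

Lemma fK_in {V : finType} (e : rel V) (K : {set V}) x : x \in K -> fK e K x = x.
Proof. by rewrite /fK => ->. Qed.

Lemma struct_K {V : finType} (e : rel V) (W K : {set V}) :
  symmetric e -> irreflexive e -> TW e W = (#|W| ^ 2)%:R -> maxcl e W K ->
  (forall x, x \in W -> fK e K x \in K) /\
  (forall x y, x \in W -> y \in W -> e x y = (fK e K x != fK e K y)).
Proof.
move=> sy ir Eq mK.
case: (mK) => cK KW mK'.
split.
  move=> x xW; case xK: (x \in K); first by rewrite fK_in.
  by case: (fK_out sy ir Eq mK xW (negbT xK)).
have mixed : forall x y, x \in K -> y \in W -> y \notin K -> e x y = (fK e K x != fK e K y).
  move=> x y xK yW yK; rewrite (fK_in e xK).
  case: (fK_out sy ir Eq mK yW yK) => my nmy umy.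
  rewrite sy; case: (eqVneq x (fK e K y)) => [->|neq]; first by rewrite (negbTE nmy).
  apply: contraTT neq => nyx; rewrite negbK; apply/eqP; exact: umy.
move=> x y xW yW.
case xK: (x \in K); case yK: (y \in K).
- rewrite (fK_in e xK) (fK_in e yK); case: (eqVneq x y) => [->|xy]; first by rewrite ir.
  exact: (cliqueP cK).
- by apply: mixed => //; rewrite yK.
- by rewrite sy eq_sym; apply: mixed => //; rewrite xK.
have xK' := negbT xK; have yK' := negbT yK.
case: (eqVneq x y) => [->|xy]; first by rewrite ir eqxx.
case: (fK_out sy ir Eq mK xW xK') => mx nmx umx.
case: (fK_out sy ir Eq mK yW yK') => my nmy umy.
have adjx : forall z, z \in K -> z != fK e K x -> e x z.
  move=> z zK; apply: contraNT => nz; apply/eqP; exact: umx.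
have adjy : forall z, z \in K -> z != fK e K y -> e y z.
  move=> z zK; apply: contraNT => nz; apply/eqP; exact: umy.
case: (eqVneq (fK e K x) (fK e K y)) => [E|NE].
  apply: negbTE; apply/negP => exy.
  set u := fK e K x.
  pose S := x |: (y |: (K :\ u)).
  have cS : clique e S.
    apply: cliqueI => a b; rewrite !inE.
    move=> /or3P[/eqP->|/eqP->|/andP[au aK]] /or3P[/eqP->|/eqP->|/andP[bu bK]] ab;
      rewrite ?eqxx // in ab;
    first [ exact: exy | (by rewrite sy) | (by apply: adjx) | (by apply: adjy => //; rewrite -E)
          | (by rewrite sy; apply: adjx) | (by rewrite sy; apply: adjy => //; rewrite -E)
          | exact: (cliqueP cK) ].
  have SW : S \subset W.
    apply/subsetP=> z; rewrite !inE => /or3P[/eqP->|/eqP->|/andP[_ zK]] //.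
    exact: (subsetP KW).
  have := mK' S cS SW.
  have hx : x \notin y |: (K :\ u) by rewrite !inE negb_or xy (negbTE xK') andbF.
  have hy : y \notin K :\ u by rewrite !inE (negbTE yK') andbF.
  rewrite /S cardsU1 cardsU1 (cardsD1 u K) mx hx hy /=.
  by rewrite !add1n ltnn.
rewrite /=; apply/negPn/negP => nexy.
set K' := x |: (K :\ fK e K x).
have cK' : clique e K'.
  apply: cliqueI => a b; rewrite !inE.
  move=> /orP[/eqP->|/andP[au aK]] /orP[/eqP->|/andP[bu bK]] ab; rewrite ?eqxx // in ab.
  + exact: adjx.
  + by rewrite sy; apply: adjx.
  + exact: (cliqueP cK).
have cardK' : #|K'| = #|K|.
  have hx : x \notin K :\ fK e K x by rewrite !inE (negbTE xK') andbF.
  by rewrite /K' cardsU1 hx [#|K|](cardsD1 (fK e K x) K) mx.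
have mK2 : maxcl e W K'.
  split=> //; last by move=> S cS SW; rewrite cardK'; apply: mK'.
  apply/subsetP=> z; rewrite !inE => /orP[/eqP->//|/andP[_ zK]]; exact: (subsetP KW).
have yK2 : y \notin K' by rewrite !inE negb_or eq_sym xy (negbTE yK') andbF.
have h := tight sy ir Eq mK2 yW yK2.
have sub : [set u in K' | e y u] \subset (K :\ fK e K x) :\ fK e K y.
  apply/subsetP=> z; rewrite !inE => /andP[/orP[/eqP->|/andP[zx zK]] eyz].
    by rewrite sy eyz in nexy.
  rewrite zx zK andbT andbT; apply: contraTneq eyz => ->; exact: nmy.
have := subset_leq_card sub.
rewrite h cardK'.
have c1 := cardsD1 (fK e K x) K; rewrite mx in c1.
have fyK : fK e K y \in K :\ fK e K x by rewrite !inE eq_sym NE my.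
have c2 := cardsD1 (fK e K y) (K :\ fK e K x); rewrite fyK in c2.
move: c1 c2; move: #|K| #|K :\ fK e K x| #|K :\ fK e K x :\ fK e K y| => a b c /= c1 c2.
by rewrite c1 c2 !add1n subn1 /= ltnn.
Qed.

Lemma cs_eq {X : finType} (D : {set X}) (p : X -> rat) (N : rat) :
  \sum_(u in D) p u = N -> #|D|%:R * \sum_(u in D) p u ^+ 2 = N ^+ 2 ->
  forall u, u \in D -> #|D|%:R * p u = N.
Proof.
move=> S1 S2 u uD.
set t : rat := #|D|%:R.
have Z : \sum_(v in D) (t * p v - N) ^+ 2 = 0.
  have -> : \sum_(v in D) (t * p v - N) ^+ 2
         = t ^+ 2 * \sum_(v in D) p v ^+ 2 - 2%:R * t * N * \sum_(v in D) p v + N ^+ 2 *+ #|D|.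
    rewrite -sumr_const mulr_sumr mulr_sumr -sumrB -big_split /=.
    by apply: eq_bigr => v _; ring.
  rewrite S1 -mulr_natr -/t.
  have -> : t ^+ 2 * \sum_(v in D) p v ^+ 2 = t * N ^+ 2 by rewrite expr2 -mulrA S2.
  ring.
have := @psumr_eq0P _ _ (fun v => v \in D) (fun v => (t * p v - N) ^+ 2) (fun v _ => sqr_ge0 _) Z u uD.
by move/eqP; rewrite sqrf_eq0 subr_eq0 => /eqP.
Qed.

Lemma bal_TW {V : finType} (e : rel V) :
  balanced_complete_multipartite e -> TW e [set: V] = (#|V| ^ 2)%:R.
Proof.
case=> k [g [k2 He Hc]].
case: (set_0Vmem [set: V]) => [E0 | [x0 _]].
  by rewrite /TW E0 big_set0 -cardsT E0 cards0.
have k0 : (0 < k)%N by apply: leq_trans k2.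
pose i0 : 'I_k := Ordinal k0.
set s := #|g @^-1: [set i0]|.
have hp : forall i, #|[set y in [set: V] | g y == i]| = s.
  by move=> i; rewrite /s -(Hc i i0); apply: eq_card => y; rewrite !inE.
have gD : forall x, x \in [set: V] -> g x \in [set: 'I_k] by move=> x _; rewrite inE.
have hn := psum gD.
rewrite (eq_bigr (fun _ => s%:R)) in hn; last by move=> i _; rewrite hp.
rewrite sumr_const !cardsT card_ord in hn.
have hn' : (s * k)%N = #|V| by apply/eqP; rewrite -(eqr_nat rat) natrM mulr_natr hn.
have s0 : (0 < s)%N.
  rewrite lt0n; apply/eqP=> s0; move: hn'; rewrite s0 mul0n => /esym/eqP.
  by rewrite -cardsT cards_eq0 => /eqP E; move: (in_setT x0); rewrite E inE.
pose r (i : 'I_k) := odflt x0 [pick x | g x == i].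
have Hr : forall i, i \in [set: 'I_k] -> r i \in [set: V] /\ g (r i) = i.
  move=> i _; split; first by rewrite inE.
  rewrite /r; case: pickP => [y /eqP //|H] /=.
  have : (0 < #|[set y in [set: V] | g y == i]|)%N by rewrite hp.
  by rewrite card_gt0 => /set0Pn[y]; rewrite !inE H.
have He' : forall x y, x \in [set: V] -> y \in [set: V] -> e x y = (g x != g y).
  by move=> x y _ _; apply: He.
rewrite (cmp_T He' gD Hr) (eq_bigr (fun _ => (s * s)%:R)); last by move=> i _; rewrite hp.
rewrite sumr_const !cardsT card_ord -hn' /wt.
have k1 : (k%:R : rat) - 1 != 0.
  rewrite subr_eq0 pnatr_eq1; apply/eqP=> k1; by rewrite k1 in k2.
rewrite natrX !natrM -mulr_natr.
field.
exact: k1.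
Qed.

Lemma TW_bal {V : finType} (e : rel V) :
  symmetric e -> irreflexive e ->
  TW e [set: V] = (#|V| ^ 2)%:R -> balanced_complete_multipartite e.
Proof.
move=> sy ir Eq.
case: (set_0Vmem [set: V]) => [E0 | [x0 _]].
  exists 2%N, (fun _ => ord0); split=> //.
    by move=> x; move: (in_setT x); rewrite E0 inE.
  move=> i j; have h : forall i : 'I_2, #|(fun _ : V => ord0) @^-1: [set i]| = 0%N.
    by move=> l; apply/eqP; rewrite cards_eq0; apply/eqP/setP=> x; move: (in_setT x); rewrite E0 inE.
  by rewrite !h.
have Eq' : TW e [set: V] = (#|[set: V]| ^ 2)%:R by rewrite cardsT.
have [K mK] := maxcl_ex e [set: V].
have [fD He] := struct_K sy ir Eq' mK.
set f := fK e K in fD He.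
have Hr : forall u, u \in K -> u \in [set: V] /\ f u = u.
  by move=> u uK; split; [rewrite inE | exact: fK_in].
have T := cmp_T He fD Hr.
have hs := psum fD.
set t := #|K| in T.
have t2 : (2 <= t)%N.
  case: t T => [|[|t]] T //; move: Eq'; rewrite T /wt ?mul0r ?subrr ?invr0 ?mulr0 ?mul0r => /esym/eqP;
    by rewrite cardsT pnatr_eq0 expn_eq0 andbT -cardsT cards_eq0 => /eqP E; move: (in_setT x0); rewrite E inE.
set n := #|[set: V]| in T hs Eq'.
set Q := \sum_(u in K) _ in T.
have t1 : (t%:R : rat) - 1 != 0.
  rewrite subr_eq0 pnatr_eq1; apply/eqP=> t1; by rewrite t1 in t2.
have tQ : t%:R * Q = n%:R ^+ 2.
  move: Eq'; rewrite T /wt natrX => E.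
  have E2 : t%:R * (n%:R ^+ 2 - Q) = (t%:R - 1) * n%:R ^+ 2.
    by rewrite -[in RHS]E mulrA [(_ - 1) * _]mulrC divfK.
  clear -E2; move: E2; move: (t%:R : rat) (n%:R : rat) Q => a b c E2; nra.
have tQ' : t%:R * \sum_(u in K) #|[set y in [set: V] | f y == u]|%:R ^+ 2 = n%:R ^+ 2 :> rat.
  by rewrite -tQ /Q; congr (_ * _); apply: eq_bigr => u _; rewrite natrM expr2.
have ceq := cs_eq hs tQ'.
have [u0 u0K] : exists u0, u0 \in K.
  by apply/set0Pn; rewrite -card_gt0 -/t; apply: leq_trans t2.
pose g x : 'I_#|K| := enum_rank_in u0K (f x).
exists #|K|, g; split => //.
  move=> x y; rewrite (He x y) ?inE //; congr negb; apply/eqP/eqP => E.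
    by rewrite /g E.
  rewrite -(enum_rankK_in u0K (fD x (in_setT x))) -(enum_rankK_in u0K (fD y (in_setT y))).
  exact: (congr1 enum_val E).
have pc : forall i : 'I_#|K|, #|g @^-1: [set i]| = #|[set y in [set: V] | f y == enum_val i]|.
  move=> i; apply: eq_card => y; rewrite !inE; apply/eqP/eqP => [<-|E].
    by rewrite /g enum_rankK_in //; exact: fD.
  by rewrite /g E enum_valK_in.
move=> i j; rewrite !pc; apply/eqP; rewrite -(eqr_nat rat).
have ti : (t%:R : rat) != 0 by rewrite pnatr_eq0 -lt0n; apply: leq_trans t2.
apply/eqP; apply: (mulfI ti); rewrite ceq ?ceq //; exact: enum_valP.
Qed.

Unset Implicit Arguments. Set Strict Implicit.

Theorem theorem1 (V : finType) (e : rel V) (n : nat) :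
  simple_graph e -> #|V| = n ->
  (\sum_(E in edges e) ((cnum e E)%:R / ((cnum e E)%:R - 1)) : rat)
    <= (n ^ 2)%:R / 2%:R
  /\
  ((\sum_(E in edges e) ((cnum e E)%:R / ((cnum e E)%:R - 1)) : rat)
    = (n ^ 2)%:R / 2%:R
   <-> balanced_complete_multipartite e).
Proof.
move=> [sy ir] Hn.
have E0 := edges_TW sy ir; rewrite /wt in E0; rewrite E0 -Hn.
have h2 : (2%:R : rat)^-1 != 0 by rewrite invr_eq0 pnatr_eq0.
split.
  rewrite ler_wpM2r ?invr_ge0 ?ler0n //.
  by have := TW_le [set: V] sy ir; rewrite cardsT.
split=> [E|B].
  apply: TW_bal => //; exact: (mulIf h2 E).
by rewrite bal_TW.
Qed.
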